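(* Let $\mathcal{AP}=\langle \Pi, E, \mathit{Hyp}, \mathit{Obs}\rangle$ be a Datalog abduction problem with $E\cap\mathit{Hyp}=\emptyset$. Define the instance $D=D^x\cup D^n$ with exogenous tuples $D^x:=E$ and endogenous tuples $D^n:=\mathit{Hyp}$, and the boolean Datalog query $\Pi':=\Pi\cup\{\mathit{ans}\leftarrow \mathit{Obs}\}$, where $\mathit{ans}$ is a fresh propositional atom. Then a hypothesis $h$ is relevant for $\mathcal{AP}$ (i.e. $h\in\mathit{Rel}(\mathcal{AP})$) if and only if $h$ is an actual cause for $\mathit{ans}$ with respect to $\Pi'$ and $D$.
   Context: A Datalog abduction problem $\langle\Pi,E,\mathit{Hyp},\mathit{Obs}\rangle$ consists of a finite set $\Pi$ of positive Datalog rules, a finite set $E$ of ground atoms whose predicates do not occur in rule heads, a finite set $\mathit{Hyp}$ of ground atoms (hypotheses) whose predicates do not occur in rule heads, and a finite conjunction $\mathit{Obs}$ of ground atoms, with $\Pi\cup E\cup\mathit{Hyp}\models\mathit{Obs}$ ($\models$ meaning membership in the minimal model). An abductive diagnosis is a subset-minimal $\Delta\subseteq\mathit{Hyp}$ with $\Pi\cup E\cup\Delta\models\mathit{Obs}$; $\mathit{Rel}(\mathcal{AP})$ is the set of hypotheses in some abductive diagnosis. A tuple $\tau\in D^n$ is an actual cause for $\mathit{ans}$ w.r.t. $\Pi'$ and $D$ if there is $\Gamma\subseteq D^n$ with $\Pi'\cup(D\smallsetminus\Gamma)\models\mathit{ans}$ and $\Pi'\cup(D\smallsetminus(\Gamma\cup\{\tau\}))\not\models\mathit{ans}$.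 *)

(* Defs.v *)
From Stdlib Require Import List.
Import ListNotations.

Definition pred := nat.
Definition const := nat.
Definition var := nat.

Inductive term : Type := TVar (v : var) | TConst (c : const).

Definition atom : Type := (pred * list term)%type.
Definition gatom : Type := (pred * list const)%type.

Definition rule : Type := (atom * list atom)%type.
Definition program := list rule.

Definition subst := var -> const.

Definition inst_term (s : subst) (t : term) : const :=
  match t with TVar v => s v | TConst c => c end.

Definition inst (s : subst) (a : atom) : gatom :=
  (fst a, map (inst_term s) (snd a)).

Definition term_vars (t : term) : list var :=
  match t with TVar v => [v] | TConst _ => [] end.

Definition atom_vars (a : atom) : list var := flat_map term_vars (snd a).

Definition safe_rule (r : rule) : Prop :=
  forall v, In v (atom_vars (fst r)) -> exists b, In b (snd r) /\ In v (atom_vars b).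

Definition safe_program (P : program) : Prop := forall r, In r P -> safe_rule r.

(* Membership in the minimal model of P ∪ F, F a set of ground facts:
   least set containing F and closed under all ground instances of rules. *)
Inductive derives (P : program) (F : gatom -> Prop) : gatom -> Prop :=
| der_fact : forall a, F a -> derives P F a
| der_rule : forall (r : rule) (s : subst),
    In r P ->
    (forall b, In b (snd r) -> derives P F (inst s b)) ->
    derives P F (inst s (fst r)).

Definition entails_all (P : program) (F : gatom -> Prop) (Obs : list gatom) : Prop :=
  forall o, In o Obs -> derives P F o.

Definition set_of (l : list gatom) : gatom -> Prop := fun a => In a l.
Definition setU (A B : gatom -> Prop) : gatom -> Prop := fun a => A a \/ B a.
Definition setD (A B : gatom -> Prop) : gatom -> Prop := fun a => A a /\ ~ B a.
Definition subset (A B : gatom -> Prop) : Prop := forall a, A a -> B a.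

Definition head_preds (P : program) : list pred := map (fun r => fst (fst r)) P.

Record abduction_problem (Pi : program) (E Hyp Obs : list gatom) : Prop := {
  ap_safe : safe_program Pi;
  ap_E_edb : forall a, In a E -> ~ In (fst a) (head_preds Pi);
  ap_Hyp_edb : forall a, In a Hyp -> ~ In (fst a) (head_preds Pi);
  ap_expl : entails_all Pi (setU (set_of E) (set_of Hyp)) Obs
}.

Definition abductive_diagnosis (Pi : program) (E Hyp Obs : list gatom)
  (Delta : gatom -> Prop) : Prop :=
  subset Delta (set_of Hyp) /\
  entails_all Pi (setU (set_of E) Delta) Obs /\
  (forall Delta', subset Delta' Delta -> ~ subset Delta Delta' ->
     ~ entails_all Pi (setU (set_of E) Delta') Obs).

Definition relevant (Pi : program) (E Hyp Obs : list gatom) (h : gatom) : Prop :=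
  exists Delta, abductive_diagnosis Pi E Hyp Obs Delta /\ Delta h.

Definition actual_cause (P : program) (Dx Dn : gatom -> Prop) (ans : gatom)
  (tau : gatom) : Prop :=
  Dn tau /\
  exists Gamma, subset Gamma Dn /\
    derives P (setD (setU Dx Dn) Gamma) ans /\
    ~ derives P (setD (setU Dx Dn) (setU Gamma (fun a => a = tau))) ans.

Definition const_atom (g : gatom) : atom := (fst g, map TConst (snd g)).

Definition query_program (Pi : program) (ans : pred) (Obs : list gatom) : program :=
  Pi ++ [((ans, []), map const_atom Obs)].

Definition atom_preds_rule (r : rule) : list pred := fst (fst r) :: map fst (snd r).
Definition program_preds (P : program) : list pred := flat_map atom_preds_rule P.

Definition fresh_pred (ans : pred) (Pi : program) (E Hyp Obs : list gatom) : Prop :=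
  ~ In ans (program_preds Pi) /\ ~ In ans (map fst E) /\
  ~ In ans (map fst Hyp) /\ ~ In ans (map fst Obs).

(* Main.v *)
Require Import Defs.
From Stdlib Require Import List Classical Arith Lia.
Import ListNotations.

Definition gdec : forall x y : gatom, {x = y} + {x <> y}.
Proof. decide equality; [apply (list_eq_dec Nat.eq_dec) | apply Nat.eq_dec]. Defined.

Lemma derives_mono P (F G : gatom -> Prop) a :
  subset F G -> derives P F a -> derives P G a.
Proof.
  intros HFG H; induction H.
  - apply der_fact; auto.
  - apply der_rule; auto.
Qed.

Lemma entails_mono P F G Obs : subset F G -> entails_all P F Obs -> entails_all P G Obs.
Proof. intros HFG H o Ho; eapply derives_mono; eauto. Qed.

Lemma inst_const s o : inst s (const_atom o) = o.
Proof.
  destruct o as [p l]; unfold inst, const_atom; simpl; f_equal.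
  rewrite map_map; simpl; apply map_id.
Qed.

Lemma pi_preds Pi r s b : In r Pi -> (b = fst r \/ In b (snd r)) ->
  In (fst (inst s b)) (program_preds Pi).
Proof.
  intros Hr Hb; unfold program_preds; apply in_flat_map; exists r; split; auto.
  unfold atom_preds_rule; simpl. destruct Hb as [-> | Hb]; [left; reflexivity|].
  right; apply in_map; auto.
Qed.

Lemma prog_mono Pi ans Obs F a : derives Pi F a -> derives (query_program Pi ans Obs) F a.
Proof.
  intro H; induction H; [apply der_fact; auto|].
  apply der_rule; auto. unfold query_program; apply in_or_app; auto.
Qed.

Lemma bridge Pi ans Obs F :
  ~ In ans (program_preds Pi) -> ~ In ans (map fst Obs) ->
  (forall a, F a -> fst a <> ans) ->
  (derives (query_program Pi ans Obs) F (ans, []) <-> entails_all Pi F Obs).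
Proof.
  intros Hp Ho HF; split.
  - intro H.
    assert (G : forall a, derives (query_program Pi ans Obs) F a ->
      (fst a <> ans -> derives Pi F a) /\ (fst a = ans -> entails_all Pi F Obs)).
    { clear H; intros a H; induction H as [a Ha | r s Hr Hb IH].
      - split; [intros; apply der_fact; auto | intro E; exfalso; exact (HF a Ha E)].
      - unfold query_program in Hr; apply in_app_or in Hr; destruct Hr as [Hr | Hr].
        + assert (Hne : fst (inst s (fst r)) <> ans).
          { intro E; apply Hp; rewrite <- E; eapply pi_preds; eauto. }
          split; [|intro E; contradiction].
          intros _; apply der_rule; auto.
          intros b Hb'; apply (proj1 (IH b Hb')); intro E; apply Hp; rewrite <- E;
            eapply pi_preds; eauto.
        + destruct Hr as [Hr | []]; subst r; simpl in *.
          split; [intro E; exfalso; apply E; reflexivity|].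
          intros _ o Hoo.
          assert (Hb' : In (const_atom o) (map const_atom Obs)) by (apply in_map; auto).
          destruct (IH _ Hb') as [IH1 _]; rewrite inst_const in IH1; apply IH1.
          intro E; simpl in E; apply Ho; rewrite <- E; apply in_map; auto. }
    apply (G _ H); reflexivity.
  - intro H.
    change (ans, @nil const) with (inst (fun _ => 0) (fst ((ans, @nil term), map const_atom Obs))).
    apply der_rule.
    + unfold query_program; apply in_or_app; right; left; reflexivity.
    + intros b Hb; simpl in Hb; apply in_map_iff in Hb; destruct Hb as [o [<- Hoo]].
      rewrite inst_const; apply prog_mono; apply H; auto.
Qed.

Lemma filter_ex (Q : gatom -> Prop) (L : list gatom) :
  exists l, forall a, In a l <-> In a L /\ Q a.
Proof.
  induction L as [|x L [l Hl]].
  - exists []; simpl; tauto.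
  - destruct (classic (Q x)) as [Hq|Hq].
    + exists (x :: l); intro a; simpl; rewrite Hl; split.
      * intros [<-|H]; tauto.
      * intros [[<-|H] Hq']; tauto.
    + exists l; intro a; simpl; rewrite Hl; split; [tauto|].
      intros [[<-|H] Hq']; tauto.
Qed.

Lemma min_exists Pi E Obs (P : gatom -> Prop) : forall n l, length l <= n ->
  subset (set_of l) P -> entails_all Pi (setU (set_of E) (set_of l)) Obs ->
  exists Delta, subset Delta P /\ entails_all Pi (setU (set_of E) Delta) Obs /\
  (forall Delta', subset Delta' Delta -> ~ subset Delta Delta' ->
     ~ entails_all Pi (setU (set_of E) Delta') Obs).
Proof.
  induction n as [|n IHn]; intros l Hlen Hsub Hent.
  - destruct l; [|simpl in Hlen; lia].
    exists (set_of []); split; auto; split; auto.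
    intros D' _ Hns; exfalso; apply Hns; intros a [].
  - destruct (classic (exists a, In a l /\
        entails_all Pi (setU (set_of E) (set_of (remove gdec a l))) Obs))
      as [[a [Ha He]]|Hno].
    + apply (IHn (remove gdec a l)); auto.
      * pose proof (remove_length_lt gdec l a Ha); lia.
      * intros x Hx; apply Hsub; apply (in_remove gdec l x a Hx).
    + exists (set_of l); split; auto; split; auto.
      intros D' HD' Hns He'; apply Hns; intros a Ha.
      apply NNPP; intro Hna; apply Hno; exists a; split; auto.
      eapply entails_mono; [|exact He'].
      intros x [Hx|Hx]; [left; auto|right].
      apply in_in_remove; [intro; subst; contradiction|apply HD'; auto].
Qed.

Theorem proposition4 (Pi : program) (E Hyp Obs : list gatom) (ans : pred) (h : gatom) :
  abduction_problem Pi E Hyp Obs ->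
  (forall a, In a E -> ~ In a Hyp) ->
  fresh_pred ans Pi E Hyp Obs ->
  (relevant Pi E Hyp Obs h <->
   actual_cause (query_program Pi ans Obs) (set_of E) (set_of Hyp) (ans, nil) h).
Proof.
  intros AP Hdisj [Fp [FE [FH FO]]].
  assert (Hfr : forall G : gatom -> Prop, (forall a, G a -> set_of E a \/ set_of Hyp a) ->
    forall a, G a -> fst a <> ans).
  { intros G HG a Ha Ea; destruct (HG a Ha) as [Hx|Hx];
      [apply FE|apply FH]; rewrite <- Ea; apply in_map; auto. }
  split.
  - intros [Delta [[HDsub [HDent HDmin]] Hh]].
    split; [apply HDsub; auto|].
    exists (fun a => In a Hyp /\ ~ Delta a); split; [intros a [Ha _]; exact Ha|split].
    + apply bridge; auto.
      * apply Hfr; intros a [[Ha|Ha] _]; auto.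
      * eapply entails_mono; [|exact HDent].
        intros a [Ha|Ha]; split.
        -- left; auto.
        -- intros [Hy _]; exact (Hdisj a Ha Hy).
        -- right; apply HDsub; auto.
        -- intros [_ Hn]; auto.
    + intro Hd; apply bridge in Hd; auto.
      * apply (HDmin (fun a => Delta a /\ a <> h)).
        -- intros a [Ha _]; auto.
        -- intro Hs; destruct (Hs h Hh); auto.
        -- eapply entails_mono; [|exact Hd].
           intros a [[Ha|Ha] Hn]; [left; auto|right].
           split; [apply NNPP; intro Hnd; apply Hn; left; auto|].
           intro; subst; apply Hn; right; reflexivity.
      * apply Hfr; intros a [[Ha|Ha] _]; auto.
  - intros [Hh [Gamma [HGsub [Hd Hnd]]]].
    apply bridge in Hd; auto; [|apply Hfr; intros a [[Ha|Ha] _]; auto].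
    destruct (filter_ex (fun a => ~ Gamma a) Hyp) as [l Hl].
    destruct (min_exists Pi E Obs (fun a => In a Hyp /\ ~ Gamma a) (length l) l (le_n _))
      as [Delta [HDsub [HDent HDmin]]].
    + intros a Ha; apply Hl; auto.
    + eapply entails_mono; [|exact Hd].
      intros a [[Ha|Ha] Hn]; [left; auto|right; apply Hl; auto].
    + exists Delta; split.
      * split; [intros a Ha; apply (HDsub a Ha)|split; auto].
      * apply NNPP; intro Hnh; apply Hnd.
        apply bridge; auto; [apply Hfr; intros a [[Ha|Ha] _]; auto|].
        eapply entails_mono; [|exact HDent].
        intros a [Ha|Ha]; split.
        -- left; auto.
        -- intros [Hg|Hg]; [exact (Hdisj a Ha (HGsub a Hg))|].
           subst; exact (Hdisj h Ha Hh).
        -- right; apply (HDsub a Ha).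
        -- intros [Hg|Hg]; [apply (HDsub a Ha); auto|subst; contradiction].
Qed.
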